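(* Let $X$ be an infinite dimensional Banach space and let $(X_n)_{n=1}^\infty$ be a sequence of Banach spaces over $\mathbb{K}$ ($\mathbb{K}=\mathbb{R}$ or $\mathbb{C}$) having a subsequence $(X_{n_k})_{k=1}^\infty$ that contains isomorphs of $X$ uniformly. Then: (a) for every $0<p<\infty$, the set $\left(\sum_n X_n\right)_p\setminus \left(\sum_n X_n\right)_p^-$ is $\dim X$-spaceable in $\left(\sum_n X_n\right)_p$; (b) the set $\left(\sum_n X_n\right)_0\setminus \bigcup_{p>0}\left(\sum_n X_n\right)_p$ is $\dim X$-spaceable in $\left(\sum_n X_n\right)_0$.
   Context: For $0<p<\infty$, $\left(\sum_n X_n\right)_p$ is the space of all sequences $(x_n)_{n=1}^\infty$ with $x_n\in X_n$ for all $n$ and $\|(x_n)\|_p:=\left(\sum_{n=1}^\infty\|x_n\|_{X_n}^p\right)^{1/p}<\infty$; it is a Banach space for $p\ge1$ and a $p$-Banach space (complete $p$-normed) for $0<p<1$. $\left(\sum_n X_n\right)_0$ is the Banach space of sequences $(x_n)$ with $x_n\in X_n$ and $\|x_n\|_{X_n}\to0$, with the sup norm. $\left(\sum_n X_n\right)_p^-:=\bigcup_{0<q<p}\left(\sum_n X_n\right)_q$, viewed as a subset of $\left(\sum_n X_n\right)_p$; similarly $\bigcup_{p>0}\left(\sum_n X_n\right)_p\subseteq\left(\sum_n X_n\right)_0$. A family $(Y_i)_{i\in I}$ of Banach spaces contains isomorphs of $X$ uniformly if there exist $\delta>0$ and linear isomorphisms onto their images (isomorphic embeddings) $R_i\colon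 X\to Y_i$ with $\max\{\|R_i\|,\|R_i^{-1}\|\}\le\delta$ for every $i\in I$. For a cardinal $\mu$ and a subset $A$ of a topological vector space $E$, $A$ is called $\mu$-spaceable if $A\cup\{0\}$ contains a closed linear subspace of $E$ of algebraic dimension $\mu$. $\dim X$ denotes the algebraic (Hamel) dimension of $X$. *)

(* Defs.v *)
From Stdlib Require Import Reals List.
Open Scope R_scope.

(* ---------- Scalars: b = false means K = R, b = true means K = C = R*R ---------- *)
Definition Kt (b : bool) : Type := if b then (R * R)%type else R.

Definition K0 (b : bool) : Kt b :=
  match b return Kt b with true => (0, 0) | false => 0 end.
Definition K1 (b : bool) : Kt b :=
  match b return Kt b with true => (1, 0) | false => 1 end.
Definition Kadd (b : bool) : Kt b -> Kt b -> Kt b :=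
  match b return Kt b -> Kt b -> Kt b with
  | true => fun z w => (fst z + fst w, snd z + snd w)
  | false => fun x y => x + y
  end.
Definition Kmul (b : bool) : Kt b -> Kt b -> Kt b :=
  match b return Kt b -> Kt b -> Kt b with
  | true => fun z w => (fst z * fst w - snd z * snd w, fst z * snd w + snd z * fst w)
  | false => fun x y => x * y
  end.
Definition Kabs (b : bool) : Kt b -> R :=
  match b return Kt b -> R with
  | true => fun z => sqrt (fst z * fst z + snd z * snd z)
  | false => fun x => Rabs x
  end.
Definition Kopp1 (b : bool) : Kt b :=
  match b return Kt b with true => (-1, 0) | false => -1 end.

Record Banach (b : bool) := {
  V :> Type;
  vzero : V;
  vadd : V -> V -> V;
  vopp : V -> V;
  vscal : Kt b -> V -> V;
  vnorm : V -> R;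
  vadd_assoc : forall x y z, vadd x (vadd y z) = vadd (vadd x y) z;
  vadd_comm : forall x y, vadd x y = vadd y x;
  vadd_0 : forall x, vadd x vzero = x;
  vadd_opp : forall x, vadd x (vopp x) = vzero;
  vscal_assoc : forall a c x, vscal a (vscal c x) = vscal (Kmul b a c) x;
  vscal_1 : forall x, vscal (K1 b) x = x;
  vscal_distr_v : forall a x y, vscal a (vadd x y) = vadd (vscal a x) (vscal a y);
  vscal_distr_K : forall a c x, vscal (Kadd b a c) x = vadd (vscal a x) (vscal c x);
  vnorm_nonneg : forall x, 0 <= vnorm x;
  vnorm_eq0 : forall x, vnorm x = 0 -> x = vzero;
  vnorm_scal : forall a x, vnorm (vscal a x) = Kabs b a * vnorm x;
  vnorm_tri : forall x y, vnorm (vadd x y) <= vnorm x + vnorm y;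
  vcomplete : forall u : nat -> V,
    (forall eps, 0 < eps -> exists N, forall m n, (N <= m)%nat -> (N <= n)%nat ->
        vnorm (vadd (u m) (vopp (u n))) < eps) ->
    exists l, forall eps, 0 < eps -> exists N, forall n, (N <= n)%nat ->
        vnorm (vadd (u n) (vopp l)) < eps
}.
Arguments vzero {b} _.
Arguments vadd {b} _ _ _.
Arguments vopp {b} _ _.
Arguments vscal {b} _ _ _.
Arguments vnorm {b} _ _.

Definition lincomb {b : bool} {W I : Type} (add : W -> W -> W) (scal : Kt b -> W -> W)
  (z : W) (c : I -> Kt b) (f : I -> W) (l : list I) : W :=
  fold_right (fun i acc => add (scal (c i) (f i)) acc) z l.

Definition hamel_basis {b : bool} {W I : Type} (add : W -> W -> W) (scal : Kt b -> W -> W)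
  (z : W) (S : W -> Prop) (f : I -> W) : Prop :=
  (forall i, S (f i)) /\
  (forall (l : list I) (c : I -> Kt b), NoDup l -> lincomb add scal z c f l = z ->
      forall i, In i l -> c i = K0 b) /\
  (forall w, S w -> exists (l : list I) (c : I -> Kt b), w = lincomb add scal z c f l).

Definition infinite_dim {b : bool} (X : Banach b) : Prop :=
  ~ exists l : list (V b X), forall x : V b X,
      exists c : V b X -> Kt b, x = lincomb (vadd X) (vscal X) (vzero X) c (fun v => v) l.

Definition is_linear {b : bool} (X Y : Banach b) (T : V b X -> V b Y) : Prop :=
  (forall x y, T (vadd X x y) = vadd Y (T x) (T y)) /\
  (forall a x, T (vscal X a x) = vscal Y a (T x)).

(* (Y k)_k contains isomorphs of X uniformly: linear R_k with ||R_k|| <= delta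
   and ||R_k^{-1}|| <= delta (on the image). *)
Definition unif_isomorphs {b : bool} (X : Banach b) (Y : nat -> Banach b) : Prop :=
  exists delta, 0 < delta /\
    forall k, exists Rk : V b X -> V b (Y k),
      is_linear X (Y k) Rk /\
      (forall x, vnorm (Y k) (Rk x) <= delta * vnorm X x) /\
      (forall x, vnorm X x <= delta * vnorm (Y k) (Rk x)).

Definition Seq {b : bool} (Xs : nat -> Banach b) : Type := forall n, V b (Xs n).
Definition seq0 {b} (Xs : nat -> Banach b) : Seq Xs := fun n => vzero (Xs n).
Definition seq_add {b} (Xs : nat -> Banach b) (x y : Seq Xs) : Seq Xs :=
  fun n => vadd (Xs n) (x n) (y n).
Definition seq_scal {b} (Xs : nat -> Banach b) (a : Kt b) (x : Seq Xs) : Seq Xs :=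
  fun n => vscal (Xs n) a (x n).
Definition seq_dnorm {b} (Xs : nat -> Banach b) (x y : Seq Xs) (n : nat) : R :=
  vnorm (Xs n) (vadd (Xs n) (x n) (vopp (Xs n) (y n))).

Definition rpow (t p : R) : R := if Rlt_dec 0 t then Rpower t p else 0.

Definition in_lp {b} (Xs : nat -> Banach b) (p : R) (x : Seq Xs) : Prop :=
  exists s, Un_cv (sum_f_R0 (fun n => rpow (vnorm (Xs n) (x n)) p)) s.

Definition in_c0 {b} (Xs : nat -> Banach b) (x : Seq Xs) : Prop :=
  Un_cv (fun n => vnorm (Xs n) (x n)) 0.

(* closedness of S in (sum X_n)_p: the topology is given by the p-norm / norm,
   i.e. y_k -> x iff sum_n ||y_k(n) - x(n)||^p -> 0 *)
Definition closed_lp {b} (Xs : nat -> Banach b) (p : R) (S : Seq Xs -> Prop) : Prop :=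
  forall (y : nat -> Seq Xs) (x : Seq Xs),
    (forall k, S (y k)) -> in_lp Xs p x ->
    (forall eps, 0 < eps -> exists K, forall k, (K <= k)%nat -> forall N,
        sum_f_R0 (fun n => rpow (seq_dnorm Xs (y k) x n) p) N <= eps) ->
    S x.

Definition closed_c0 {b} (Xs : nat -> Banach b) (S : Seq Xs -> Prop) : Prop :=
  forall (y : nat -> Seq Xs) (x : Seq Xs),
    (forall k, S (y k)) -> in_c0 Xs x ->
    (forall eps, 0 < eps -> exists K, forall k, (K <= k)%nat -> forall n,
        seq_dnorm Xs (y k) x n <= eps) ->
    S x.

Definition is_subspace {b} (Xs : nat -> Banach b) (S : Seq Xs -> Prop) : Prop :=
  S (seq0 Xs) /\ (forall x y, S x -> S y -> S (seq_add Xs x y)) /\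
  (forall a x, S x -> S (seq_scal Xs a x)).

(* algebraic dimension of the subspace S equals dim X: Hamel bases indexed by the same set *)
Definition same_dim {b} (X : Banach b) (Xs : nat -> Banach b) (S : Seq Xs -> Prop) : Prop :=
  exists (I : Type) (e : I -> V b X) (f : I -> Seq Xs),
    hamel_basis (vadd X) (vscal X) (vzero X) (fun _ => True) e /\
    hamel_basis (seq_add Xs) (seq_scal Xs) (seq0 Xs) S f.

Definition spaceable {b} (X : Banach b) (Xs : nat -> Banach b)
  (E : Seq Xs -> Prop) (closed : (Seq Xs -> Prop) -> Prop) (A : Seq Xs -> Prop) : Prop :=
  exists W : Seq Xs -> Prop,
    is_subspace Xs W /\ (forall x, W x -> E x) /\ closed W /\
    (forall x, W x -> A x \/ x = seq0 Xs) /\ same_dim X Xs W.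

(* Main.v *)
Require Import Defs.
From Stdlib Require Import Reals List Classical Lra Lia ClassicalEpsilon FunctionalExtensionality Arith ProofIrrelevance FinFun.
From mathcomp Require classical_sets.
Open Scope R_scope.

Definition Kr (b : bool) (r : R) : Kt b :=
  match b return Kt b with true => (r, 0) | false => r end.

Lemma Kadd_00 b : Kadd b (K0 b) (K0 b) = K0 b.
Proof. destruct b; simpl; f_equal; ring. Qed.
Lemma Kmul_comm b a c : Kmul b a c = Kmul b c a.
Proof. destruct b; simpl; [destruct a, c; simpl; f_equal; ring | ring]. Qed.
Lemma Kabs_K0 b : Kabs b (K0 b) = 0.
Proof. destruct b; simpl; [|apply Rabs_R0]. replace (0*0+0*0) with 0 by ring. apply sqrt_0. Qed.
Lemma Kabs_Kr b r : Kabs b (Kr b r) = Rabs r.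
Proof. destruct b; simpl; [|reflexivity]. replace (r*r+0*0) with (Rsqr r) by (unfold Rsqr; ring).
  apply sqrt_Rsqr_abs. Qed.
Lemma Kabs_opp1 b : Kabs b (Kopp1 b) = 1.
Proof. destruct b; simpl. replace (-1 * -1 + 0*0) with 1 by ring. apply sqrt_1.
  unfold Rabs; destruct Rcase_abs; lra. Qed.
Lemma Kadd_1_opp1 b : Kadd b (K1 b) (Kopp1 b) = K0 b.
Proof. destruct b; simpl; f_equal; ring. Qed.

Definition Kinv (b : bool) : Kt b -> Kt b :=
  match b return Kt b -> Kt b with
  | true => fun z => (fst z / (fst z * fst z + snd z * snd z),
                      - snd z / (fst z * fst z + snd z * snd z))
  | false => fun x => / x
  end.
Lemma Kinv_l b a : a <> K0 b -> Kmul b (Kinv b a) a = K1 b.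
Proof.
destruct b; simpl; intro H.
- destruct a as [x y]; simpl.
  assert (Hn : x * x + y * y <> 0).
  { intro E. apply H. assert (x = 0) by nra. assert (y = 0) by nra. subst; reflexivity. }
  f_equal; field; exact Hn.
- apply Rinv_l; exact H.
Qed.

Lemma add_0_l {b} (Y : Banach b) x : vadd Y (vzero Y) x = x.
Proof. rewrite vadd_comm; apply vadd_0. Qed.
Lemma add_cancel_l {b} (Y : Banach b) x y z : vadd Y x y = vadd Y x z -> y = z.
Proof.
intro H. assert (E : forall t, vadd Y (vopp Y x) (vadd Y x t) = t).
{ intro t. rewrite vadd_assoc, (vadd_comm _ Y (vopp Y x)), vadd_opp. apply add_0_l. }
rewrite <- (E y), <- (E z), H. reflexivity.
Qed.
Lemma scal_K0 {b} (Y : Banach b) x : vscal Y (K0 b) x = vzero Y.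
Proof.
apply (add_cancel_l Y (vscal Y (K0 b) x)). rewrite vadd_0.
rewrite <- vscal_distr_K, Kadd_00. reflexivity.
Qed.
Lemma scal_0 {b} (Y : Banach b) a : vscal Y a (vzero Y) = vzero Y.
Proof.
apply (add_cancel_l Y (vscal Y a (vzero Y))). rewrite vadd_0.
rewrite <- vscal_distr_v, vadd_0. reflexivity.
Qed.
Lemma opp_scal {b} (Y : Banach b) x : vopp Y x = vscal Y (Kopp1 b) x.
Proof.
apply (add_cancel_l Y x). rewrite vadd_opp.
rewrite <- (vscal_1 _ Y x) at 1. rewrite <- vscal_distr_K, Kadd_1_opp1, scal_K0. reflexivity.
Qed.
Lemma norm_0 {b} (Y : Banach b) : vnorm Y (vzero Y) = 0.
Proof. rewrite <- (scal_K0 Y (vzero Y)), vnorm_scal, Kabs_K0; ring. Qed.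
Lemma norm_opp {b} (Y : Banach b) x : vnorm Y (vopp Y x) = vnorm Y x.
Proof. rewrite opp_scal, vnorm_scal, Kabs_opp1; ring. Qed.
Lemma opp_add {b} (Y : Banach b) x y : vopp Y (vadd Y x y) = vadd Y (vopp Y x) (vopp Y y).
Proof. rewrite !opp_scal. apply vscal_distr_v. Qed.
Lemma opp_opp {b} (Y : Banach b) x : vopp Y (vopp Y x) = x.
Proof.
apply (add_cancel_l Y (vopp Y x)). rewrite vadd_opp, vadd_comm, vadd_opp. reflexivity.
Qed.
Lemma opp_0 {b} (Y : Banach b) : vopp Y (vzero Y) = vzero Y.
Proof. rewrite opp_scal; apply scal_0. Qed.
Lemma sub_eq {b} (Y : Banach b) x y : vadd Y x (vopp Y y) = vzero Y -> x = y.
Proof.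
intro H. apply (add_cancel_l Y (vopp Y y)).
rewrite vadd_comm, H, vadd_comm, vadd_opp. reflexivity.
Qed.
Lemma dist_tri {b} (Y : Banach b) x y z :
  vnorm Y (vadd Y x (vopp Y z)) <= vnorm Y (vadd Y x (vopp Y y)) + vnorm Y (vadd Y y (vopp Y z)).
Proof.
replace (vadd Y x (vopp Y z)) with (vadd Y (vadd Y x (vopp Y y)) (vadd Y y (vopp Y z))).
- apply vnorm_tri.
- rewrite <- vadd_assoc, (vadd_assoc _ Y (vopp Y y)), (vadd_comm _ Y (vopp Y y)), vadd_opp, add_0_l.
  reflexivity.
Qed.
Lemma dist_sym {b} (Y : Banach b) x y :
  vnorm Y (vadd Y x (vopp Y y)) = vnorm Y (vadd Y y (vopp Y x)).
Proof. rewrite <- norm_opp, opp_add, opp_opp, vadd_comm. reflexivity. Qed.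
Lemma dist_self {b} (Y : Banach b) x : vnorm Y (vadd Y x (vopp Y x)) = 0.
Proof. rewrite vadd_opp; apply norm_0. Qed.
Lemma eq_of_small {b} (Y : Banach b) x y :
  (forall eps, 0 < eps -> vnorm Y (vadd Y x (vopp Y y)) <= eps) -> x = y.
Proof.
intro H. apply sub_eq, vnorm_eq0.
pose proof (vnorm_nonneg _ Y (vadd Y x (vopp Y y))) as H0.
destruct (Rle_lt_or_eq_dec _ _ H0) as [h|h]; [|auto].
assert (hh : 0 < vnorm Y (vadd Y x (vopp Y y)) / 2) by lra. specialize (H _ hh); lra.
Qed.
Lemma scal_opp {b} (Y : Banach b) a x : vscal Y a (vopp Y x) = vopp Y (vscal Y a x).
Proof. rewrite !opp_scal, !vscal_assoc, Kmul_comm. reflexivity. Qed.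

Lemma lin_0 {b} (X Y : Banach b) L : is_linear X Y L -> L (vzero X) = vzero Y.
Proof.
intros [Ha Hs]. rewrite <- (scal_K0 X (vzero X)), Hs, scal_K0. reflexivity.
Qed.
Lemma lin_sub {b} (X Y : Banach b) L x y : is_linear X Y L ->
  L (vadd X x (vopp X y)) = vadd Y (L x) (vopp Y (L y)).
Proof.
intros [Ha Hs]. rewrite Ha, !opp_scal, Hs. reflexivity.
Qed.

Lemma zorn_sets (T:Type) (P : (T->Prop) -> Prop) :
  (forall F : (T->Prop)->Prop, (forall A, F A -> P A) ->
     (forall A B, F A -> F B -> (forall x, A x -> B x) \/ (forall x, B x -> A x)) ->
     P (fun x => exists2 A, F A & A x)) ->
  exists A, P A /\ forall B, (forall x, A x -> B x) -> P B -> forall x, B x -> A x.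
Proof.
intros H.
destruct (@classical_sets.Zorn_bigcup T P) as [A [PA HA]].
- intros F HF Htot. exact (H F HF Htot).
- exists A; split; [exact PA|].
  intros B AB PB x Bx.
  apply NNPP; intro nA.
  apply (HA B); [|exact PB].
  unfold classical_sets.proper. split; [exact AB|].
  intro BA. apply nA. apply BA. exact Bx.
Qed.

Definition lc {b} (X : Banach b) (c : V b X -> Kt b) (l : list (V b X)) : V b X :=
  lincomb (vadd X) (vscal X) (vzero X) c (fun v => v) l.

Definition indep {b} (X : Banach b) (S : V b X -> Prop) : Prop :=
  forall l c, NoDup l -> (forall v, In v l -> S v) -> lc X c l = vzero X ->
    forall v, In v l -> c v = K0 b.

Lemma lc_app {b} (X : Banach b) c l1 l2 : lc X c (l1 ++ l2) = vadd X (lc X c l1) (lc X c l2).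
Proof.
induction l1 as [|v l1 IH]; simpl.
- unfold lc; simpl. rewrite add_0_l. reflexivity.
- unfold lc in *; simpl. rewrite IH, vadd_assoc. reflexivity.
Qed.
Lemma lc_cons {b} (X : Banach b) c v l : lc X c (v :: l) = vadd X (vscal X (c v) v) (lc X c l).
Proof. reflexivity. Qed.
Lemma lc_scal {b} (X : Banach b) a c l :
  vscal X a (lc X c l) = lc X (fun v => Kmul b a (c v)) l.
Proof.
induction l as [|v l IH]; unfold lc in *; simpl.
- apply scal_0.
- rewrite vscal_distr_v, IH, vscal_assoc. reflexivity.
Qed.

Lemma chain_cover {b} (X : Banach b) (F : (V b X -> Prop) -> Prop) :
  (forall A B, F A -> F B -> (forall x, A x -> B x) \/ (forall x, B x -> A x)) ->
  forall l, (forall v, In v l -> exists2 A, F A & A v) ->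
  l = nil \/ exists A, F A /\ forall v, In v l -> A v.
Proof.
intros Htot l. induction l as [|w l IH]; intro Hl; [left; reflexivity|right].
destruct (Hl w (or_introl eq_refl)) as [Aw FAw Aww].
destruct IH as [E|[B [FB HB]]].
- intros v Hv; apply Hl; right; exact Hv.
- subst l. exists Aw; split; [exact FAw|]. intros v [<-|[]]; exact Aww.
- destruct (Htot Aw B FAw FB) as [h|h].
  + exists B; split; [exact FB|]. intros v [<-|Hv]; auto.
  + exists Aw; split; [exact FAw|]. intros v [<-|Hv]; auto.
Qed.

Lemma exists_max_indep {b} (X : Banach b) :
  exists M, indep X M /\ forall B, (forall x, M x -> B x) -> indep X B -> forall x, B x -> M x.
Proof.
apply zorn_sets. intros F HF Htot l c Hnd Hl Hz v Hv.
destruct (chain_cover X F Htot l Hl) as [E|[A [FA HA]]].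
- subst l; destruct Hv.
- exact (HF A FA l c Hnd HA Hz v Hv).
Qed.

Lemma max_indep_span {b} (X : Banach b) M :
  indep X M -> (forall B, (forall x, M x -> B x) -> indep X B -> forall x, B x -> M x) ->
  forall w, exists l c, (forall v, In v l -> M v) /\ w = lc X c l.
Proof.
intros HM Hmax w. apply NNPP; intro Hn.
assert (Hind : indep X (fun v => M v \/ v = w)).
{ intros l c Hnd Hl Hz v Hv.
  destruct (classic (In w l)) as [Hw|Hw].
  - destruct (in_split w l Hw) as [l1 [l2 E]]. subst l.
    pose proof (NoDup_remove_1 _ _ _ Hnd) as Hnd'.
    pose proof (NoDup_remove_2 _ _ _ Hnd) as Hnw.
    assert (HlM : forall u, In u (l1 ++ l2) -> M u).
    { intros u Hu. destruct (Hl u) as [h|h].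
      - apply in_or_app. apply in_app_or in Hu. destruct Hu; [left|right; right]; auto.
      - exact h.
      - subst u. contradiction. }
    assert (Hz2 : vadd X (vscal X (c w) w) (lc X c (l1 ++ l2)) = vzero X).
    { rewrite lc_app in Hz |- *. rewrite lc_cons in Hz.
      rewrite <- Hz. rewrite !vadd_assoc. f_equal. apply vadd_comm. }
    assert (Hcw : c w = K0 b).
    { apply NNPP; intro Hc. apply Hn.
      exists (l1 ++ l2), (fun v => Kmul b (Kinv b (c w)) (Kmul b (Kopp1 b) (c v))).
      split; [exact HlM|].
      rewrite <- lc_scal, <- lc_scal, <- opp_scal.
      assert (E : vscal X (c w) w = vopp X (lc X c (l1 ++ l2))).
      { apply sub_eq. rewrite opp_opp. exact Hz2. }
      rewrite <- E, vscal_assoc, Kinv_l, vscal_1; auto. }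
    rewrite Hcw, scal_K0, add_0_l in Hz2.
    apply in_app_or in Hv. destruct Hv as [Hv|[<-|Hv]].
    + apply (HM _ _ Hnd' HlM Hz2). apply in_or_app; left; exact Hv.
    + exact Hcw.
    + apply (HM _ _ Hnd' HlM Hz2). apply in_or_app; right; exact Hv.
  - assert (HlM : forall u, In u l -> M u).
    { intros u Hu. destruct (Hl u Hu) as [h|h]; [exact h|subst; contradiction]. }
    exact (HM l c Hnd HlM Hz v Hv). }
assert (Mw : M w) by (apply (Hmax _ (fun x h => or_introl h) Hind); right; reflexivity).
apply Hn. exists (w :: nil), (fun _ => K1 b). split.
- intros v [<-|[]]; exact Mw.
- rewrite lc_cons, vscal_1. unfold lc; simpl. rewrite vadd_0. reflexivity.
Qed.

Fixpoint liftl {b} (X : Banach b) (M : V b X -> Prop) (l : list (V b X)) : list {v | M v} :=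
  match l with
  | nil => nil
  | v :: t => match excluded_middle_informative (M v) with
              | left H => exist _ v H :: liftl X M t
              | right _ => liftl X M t
              end
  end.

Lemma hamel_exists {b} (X : Banach b) :
  exists (I : Type) (e : I -> V b X), hamel_basis (vadd X) (vscal X) (vzero X) (fun _ => True) e.
Proof.
destruct (exists_max_indep X) as [M [HM Hmax]].
exists {v | M v}, (@proj1_sig _ M). split; [|split].
- intros; exact I.
- intros l c Hnd Hz i Hi.
  pose (c' := fun v => match excluded_middle_informative (M v) with
                       | left H => c (exist _ v H) | right _ => K0 b end).
  assert (Hc' : forall j, c' (proj1_sig j) = c j).
  { intros [v H]; unfold c'; simpl. destruct (excluded_middle_informative (M v)) as [H'|H'].
    - f_equal. f_equal. apply proof_irrelevance.
    - contradiction. }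
  assert (E : lincomb (vadd X) (vscal X) (vzero X) c (@proj1_sig _ M) l = lc X c' (map (@proj1_sig _ M) l)).
  { clear Hnd Hz Hi. induction l as [|j l IH]; [reflexivity|].
    simpl. rewrite IH, Hc'. reflexivity. }
  rewrite <- Hc'. apply (HM (map (@proj1_sig _ M) l) c').
  + apply Injective_map_NoDup; [|exact Hnd].
    intros [x hx] [y hy]; simpl; intro; subst. f_equal; apply proof_irrelevance.
  + intros v Hv. apply in_map_iff in Hv. destruct Hv as [[x hx] [<- _]]. exact hx.
  + rewrite <- E; exact Hz.
  + apply in_map; exact Hi.
- intros w _. destruct (max_indep_span X M HM Hmax w) as [l [c [Hl E]]].
  exists (liftl X M l), (fun j => c (proj1_sig j)). rewrite E. clear E.
  induction l as [|v l IH]; [reflexivity|]. simpl.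
  destruct (excluded_middle_informative (M v)) as [H|H].
  + simpl. unfold lc in IH |- *; simpl. rewrite IH; [reflexivity|]. intros; apply Hl; right; auto.
  + exfalso; apply H, Hl; left; reflexivity.
Qed.

Lemma ln_le_sub1 y : 0 < y -> ln y <= y - 1.
Proof.
intro Hy. destruct (Rle_or_lt (ln y) (y - 1)) as [h|h]; [exact h|].
pose proof (exp_increasing _ _ h). rewrite exp_ln in H by exact Hy.
pose proof (exp_ineq1_le (y - 1)). lra.
Qed.

Lemma ln_small eps : 0 < eps -> exists M, 0 < M /\ forall L, M <= L -> ln L <= eps * L.
Proof.
intro He. set (a := 2 / eps). assert (Ha : 0 < a) by (unfold a; apply Rdiv_lt_0_compat; lra).
assert (Hea : eps * a = 2) by (unfold a; field; lra).
exists (a * a + 1). split; [nra|]. intros L HL.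
assert (HL0 : 0 < L) by nra.
set (s := sqrt L). assert (Hs : s * s = L) by (apply sqrt_sqrt; lra).
assert (Hs0 : 0 < s) by (apply sqrt_lt_R0; lra).
assert (E : ln L = ln s + ln s) by (rewrite <- Hs; apply ln_mult; lra).
pose proof (ln_le_sub1 s Hs0).
assert (Hsa : a <= s) by nra.
rewrite E, <- Hs. nra.
Qed.

Lemma ln_div x y : 0 < x -> 0 < y -> ln (x / y) = ln x - ln y.
Proof. intros; unfold Rdiv; rewrite ln_mult, ln_Rinv; [ring| |auto|apply Rinv_0_lt_compat]; auto. Qed.
Lemma exp_le a c : a <= c -> exp a <= exp c.
Proof. intros [h|h]; [left; apply exp_increasing; auto|subst; lra]. Qed.

Lemma large_nat A : exists N : nat, A < INR N.
Proof. destruct (INR_archimed 1 A) as [n Hn]; [lra|]. exists n; lra. Qed.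

Lemma large_ln M : exists K, forall k, (K <= k)%nat -> M <= ln (INR k + 3).
Proof.
destruct (large_nat (exp M)) as [K HK]. exists K. intros k Hk.
apply le_INR in Hk. rewrite <- (ln_exp M). left. apply ln_increasing; [apply exp_pos|]. lra.
Qed.

Lemma sum_nonneg g N : (forall n, 0 <= g n) -> 0 <= sum_f_R0 g N.
Proof. intro H; induction N; simpl; [apply H|]. pose proof (H (S N)); lra. Qed.
Lemma sum_mono g M N : (forall n, 0 <= g n) -> (M <= N)%nat -> sum_f_R0 g M <= sum_f_R0 g N.
Proof.
intros H HMN. induction HMN; [lra|]. simpl. pose proof (H (S m)); lra.
Qed.
Lemma sum_ge_term g n N : (forall n, 0 <= g n) -> (n <= N)%nat -> g n <= sum_f_R0 g N.
Proof.
intros H Hn. apply Rle_trans with (sum_f_R0 g n); [|apply sum_mono; auto].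
destruct n; simpl; [lra|]. pose proof (sum_nonneg g n H); lra.
Qed.
Lemma sum_le g h N : (forall n, g n <= h n) -> sum_f_R0 g N <= sum_f_R0 h N.
Proof. intro H; induction N; simpl; [apply H|]. pose proof (H (S N)); lra. Qed.
Lemma sum_scal g c N : sum_f_R0 (fun n => c * g n) N = c * sum_f_R0 g N.
Proof. induction N; simpl; [ring|]. rewrite IHN; ring. Qed.

Definition unbounded_sum (g : nat -> R) := forall M, exists N, M <= sum_f_R0 g N.

Lemma ln_step x : 0 < x -> ln (x + 1) - ln x <= / x.
Proof.
intro Hx. rewrite <- ln_div by lra. pose proof (ln_le_sub1 ((x+1)/x)).
assert (0 < (x+1)/x) by (apply Rdiv_lt_0_compat; lra).
replace ((x+1)/x - 1) with (/x) in H by (field; lra). auto.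
Qed.

Lemma harmonic g K : (forall n, 0 <= g n) -> (forall k, (K <= k)%nat -> / (INR k + 3) <= g k) ->
  unbounded_sum g.
Proof.
intros Hg HK.
assert (Cl : forall j, ln (INR (K + j) + 4) - ln (INR K + 3) <= sum_f_R0 g (K + j)).
{ intro j. induction j.
  - rewrite Nat.add_0_r. pose proof (sum_ge_term g K K Hg (le_n K)).
    pose proof (HK K (le_n K)). pose proof (ln_step (INR K + 3)).
    replace (INR K + 4) with (INR K + 3 + 1) by ring.
    pose proof (pos_INR K). assert (0 < INR K + 3) by lra. specialize (H1 H3). lra.
  - rewrite Nat.add_succ_r. simpl sum_f_R0. pose proof (HK (S (K + j)) ltac:(lia)).
    rewrite S_INR in *. pose proof (pos_INR (K + j)).
    pose proof (ln_step (INR (K + j) + 4) ltac:(lra)).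
    replace (INR (K + j) + 1 + 3) with (INR (K + j) + 4) in H by ring.
    replace (INR (K + j) + 1 + 4) with (INR (K + j) + 4 + 1) by ring. lra. }
intro M. destruct (large_nat (exp (M + ln (INR K + 3)))) as [N HN].
exists (K + N)%nat. eapply Rle_trans; [|apply Cl].
assert (M + ln (INR K + 3) <= ln (INR (K + N) + 4)).
{ rewrite <- (ln_exp (M + ln (INR K + 3))). left. apply ln_increasing; [apply exp_pos|].
  rewrite plus_INR. pose proof (pos_INR K). lra. }
lra.
Qed.

Lemma rpow_nonneg t p : 0 <= rpow t p.
Proof. unfold rpow; destruct Rlt_dec; [left; apply exp_pos|lra]. Qed.
Lemma rpow_pos t p : 0 < t -> rpow t p = Rpower t p.
Proof. unfold rpow; destruct Rlt_dec; [reflexivity|contradiction]. Qed.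
Lemma rpow_0 p : rpow 0 p = 0.
Proof. unfold rpow; destruct Rlt_dec; [lra|reflexivity]. Qed.
Lemma rpow_le s t p : 0 < p -> 0 <= s <= t -> rpow s p <= rpow t p.
Proof.
intros Hp [H1 H2]. destruct (Req_dec s 0) as [E|E].
- subst; rewrite rpow_0; apply rpow_nonneg.
- rewrite !rpow_pos by lra. apply Rle_Rpower_l; lra.
Qed.
Lemma rpow_mult s t p : 0 <= s -> 0 <= t -> rpow (s * t) p = rpow s p * rpow t p.
Proof.
intros Hs Ht. destruct (Req_dec s 0) as [E|E]; [subst; rewrite Rmult_0_l, !rpow_0; ring|].
destruct (Req_dec t 0) as [F|F]; [subst; rewrite Rmult_0_r, !rpow_0; ring|].
rewrite !rpow_pos by nra. symmetry; apply Rpower_mult_distr; lra.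
Qed.
Lemma rpow_small d e p : 0 < p -> 0 < e -> 0 <= d -> rpow d p <= Rpower e p -> d <= e.
Proof.
intros Hp He Hd H. destruct (Rle_or_lt d e) as [h|h]; [exact h|].
rewrite rpow_pos in H by lra. pose proof (Rlt_Rpower_l e d p Hp ltac:(lra)). lra.
Qed.
Lemma rpow_Rpower_pos e p : 0 < e -> 0 < Rpower e p.
Proof. intro; unfold Rpower; apply exp_pos. Qed.

Definition ta (k : nat) : R := / ((INR k + 3) * (ln (INR k + 3) * ln (INR k + 3))).

Lemma ln_pos_ge2 x : 2 <= x -> 0 < ln x.
Proof. intro; rewrite <- ln_1; apply ln_increasing; lra. Qed.

Lemma ta_pos k : 0 < ta k.
Proof.
unfold ta. pose proof (pos_INR k). pose proof (ln_pos_ge2 (INR k + 3) ltac:(lra)).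
apply Rinv_0_lt_compat. apply Rmult_lt_0_compat; [lra|nra].
Qed.

Lemma ta_tele k : ta k <= / ln (INR k + 2) - / ln (INR k + 3).
Proof.
unfold ta. set (x := INR k + 2). replace (INR k + 3) with (x + 1) by (unfold x; ring).
assert (Hx : 2 <= x) by (unfold x; pose proof (pos_INR k); lra).
set (a := ln x). set (c := ln (x + 1)).
assert (Ha : 0 < a) by (apply ln_pos_ge2; lra).
assert (Hac : a <= c) by (left; apply ln_increasing; lra).
assert (Hd : / (x + 1) <= c - a).
{ pose proof (ln_le_sub1 (x / (x+1)) ltac:(apply Rdiv_lt_0_compat; lra)).
  rewrite ln_div in H by lra. replace (x / (x+1) - 1) with (- / (x+1)) in H by (field; lra).
  fold a c in H. lra. }
replace (/ a - / c) with ((c - a) * / (a * c)) by (field; lra).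
rewrite Rinv_mult. apply Rmult_le_compat.
- left; apply Rinv_0_lt_compat; lra.
- left; apply Rinv_0_lt_compat; nra.
- exact Hd.
- apply Rinv_le_contravar; nra.
Qed.

Lemma ta_bounded : exists B, forall N, sum_f_R0 ta N <= B.
Proof.
exists (/ ln 2). assert (forall N, sum_f_R0 ta N <= / ln 2 - / ln (INR N + 3)).
{ induction N.
  - simpl. pose proof (ta_tele 0). simpl in H. replace (0+2) with 2 in H by ring. exact H.
  - cbn [sum_f_R0]. pose proof (ta_tele (S N)). rewrite S_INR in *.
    replace (INR N + 1 + 2) with (INR N + 3) in H by ring. lra. }
intro N. specialize (H N). pose proof (pos_INR N).
pose proof (ln_pos_ge2 (INR N + 3) ltac:(lra)).
assert (0 < / ln (INR N + 3)) by (apply Rinv_0_lt_compat; lra). lra.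
Qed.

Lemma inv_as_exp x : 0 < x -> / x = exp (- ln x).
Proof. intro; rewrite exp_Ropp, exp_ln; auto. Qed.

Lemma ta_unbounded r : 0 < r < 1 -> unbounded_sum (fun k => Rpower (ta k) r).
Proof.
intro Hr. destruct (ln_small ((1 - r) / (2 * r))) as [M [HM HMl]].
{ apply Rdiv_lt_0_compat; lra. }
destruct (large_ln M) as [K HK].
apply (harmonic _ K). { intro; left; apply rpow_Rpower_pos, ta_pos. }
intros k Hk. specialize (HK k Hk). specialize (HMl _ HK).
pose proof (pos_INR k). set (x := INR k + 3) in *. set (L := ln x) in *.
assert (HL : 0 < L) by (apply ln_pos_ge2; unfold x; lra).
rewrite inv_as_exp by (unfold x; lra). unfold Rpower.
assert (E : ln (ta k) = - (L + (ln L + ln L))).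
{ unfold ta. fold x L. rewrite ln_Rinv by (unfold x; nra).
  rewrite ln_mult, ln_mult by (unfold x; nra). reflexivity. }
rewrite E. apply exp_le.
assert (H2 : (1 - r) / (2 * r) * L * (2 * r) = (1 - r) * L) by (field; lra).
assert (H3 : ln L * (2 * r) <= (1 - r) / (2 * r) * L * (2 * r)) by (apply Rmult_le_compat_r; lra).
fold L. rewrite H2 in H3. lra.
Qed.

Definition tb (k : nat) : R := / ln (INR k + 3).
Lemma tb_pos k : 0 < tb k.
Proof. unfold tb; pose proof (pos_INR k); apply Rinv_0_lt_compat, ln_pos_ge2; lra. Qed.
Lemma tb_small eps : 0 < eps -> exists K, forall k, (K <= k)%nat -> tb k < eps.
Proof.
intro He. destruct (large_ln (/ eps + 1)) as [K HK]. exists K. intros k Hk.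
specialize (HK k Hk). unfold tb. pose proof (Rinv_0_lt_compat _ He).
rewrite <- (Rinv_inv eps). apply Rinv_lt_contravar; nra.
Qed.
Lemma tb_unbounded q : 0 < q -> unbounded_sum (fun k => Rpower (tb k) q).
Proof.
intro Hq. destruct (ln_small (/ q)) as [M [HM HMl]]. { apply Rinv_0_lt_compat; lra. }
destruct (large_ln M) as [K HK].
apply (harmonic _ K). { intro; left; apply rpow_Rpower_pos, tb_pos. }
intros k Hk. specialize (HK k Hk). specialize (HMl _ HK).
pose proof (pos_INR k). set (x := INR k + 3) in *. set (L := ln x) in *.
assert (HL : 0 < L) by (apply ln_pos_ge2; unfold x; lra).
rewrite inv_as_exp by (unfold x; lra). unfold Rpower, tb. fold x L.
rewrite ln_Rinv by lra. apply exp_le.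
assert (H3 : ln L * q <= / q * L * q) by (apply Rmult_le_compat_r; lra).
replace (/ q * L * q) with L in H3 by (field; lra). fold L. nra.
Qed.

Record Data {b} (X : Banach b) (Xs : nat -> Banach b) := {
  nk : nat -> nat; dl : R; Rk : forall k, V b X -> V b (Xs (nk k));
  nk_inc : forall k, (nk k < nk (S k))%nat; dl_pos : 0 < dl;
  Rk_lin : forall k, is_linear X (Xs (nk k)) (Rk k);
  Rk_ub : forall k x, vnorm (Xs (nk k)) (Rk k x) <= dl * vnorm X x;
  Rk_lb : forall k x, vnorm X x <= dl * vnorm (Xs (nk k)) (Rk k x) }.
Arguments nk {b X Xs}. Arguments dl {b X Xs}. Arguments Rk {b X Xs}.
Arguments nk_inc {b X Xs}. Arguments dl_pos {b X Xs}. Arguments Rk_lin {b X Xs}.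
Arguments Rk_ub {b X Xs}. Arguments Rk_lb {b X Xs}.

Definition tr {b} (Xs : nat -> Banach b) {m n : nat} (H : m = n) (v : V b (Xs m)) : V b (Xs n) :=
  eq_rect m (fun j => V b (Xs j)) v n H.


Lemma tr_add {b} Xs m n (H : m = n) x y :
  @tr b Xs m n H (vadd (Xs m) x y) = vadd (Xs n) (tr Xs H x) (tr Xs H y).
Proof. destruct H; reflexivity. Qed.
Lemma tr_scal {b} Xs m n (H : m = n) a x :
  @tr b Xs m n H (vscal (Xs m) a x) = vscal (Xs n) a (tr Xs H x).
Proof. destruct H; reflexivity. Qed.
Lemma tr_zero {b} Xs m n (H : m = n) : @tr b Xs m n H (vzero (Xs m)) = vzero (Xs n).
Proof. destruct H; reflexivity. Qed.
Lemma tr_norm {b} Xs m n (H : m = n) x : vnorm (Xs n) (@tr b Xs m n H x) = vnorm (Xs m) x.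
Proof. destruct H; reflexivity. Qed.

Definition Top {b} {X : Banach b} {Xs : nat -> Banach b} (D : Data X Xs) (w : nat -> R)
  (u : V b X) : Seq Xs :=
  fun n => match excluded_middle_informative (exists k, nk D k = n) with
  | left H => let s := constructive_indefinite_description _ H in
      tr Xs (proj2_sig s) (vscal (Xs (nk D (proj1_sig s))) (Kr b (w (proj1_sig s))) (Rk D (proj1_sig s) u))
  | right _ => vzero (Xs n)
  end.

Lemma T_char {b} {X : Banach b} {Xs} (D : Data X Xs) w n :
  (exists k (H : nk D k = n), forall u,
      Top D w u n = tr Xs H (vscal (Xs (nk D k)) (Kr b (w k)) (Rk D k u))) \/
  ((~ exists k, nk D k = n) /\ forall u, Top D w u n = vzero (Xs n)).
Proof.
unfold Top. destruct (excluded_middle_informative (exists k, nk D k = n)) as [H|H].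
- left. destruct (constructive_indefinite_description _ H) as [k Hk]. simpl.
  exists k, Hk. reflexivity.
- right. split; [exact H|reflexivity].
Qed.

Lemma nk_mono {b} {X : Banach b} {Xs} (D : Data X Xs) j k : (j < k)%nat -> (nk D j < nk D k)%nat.
Proof.
intro H. induction H.
- apply nk_inc.
- pose proof (nk_inc D m). lia.
Qed.
Lemma nk_inj {b} {X : Banach b} {Xs} (D : Data X Xs) j k : nk D j = nk D k -> j = k.
Proof.
intro E. destruct (Nat.lt_trichotomy j k) as [h|[h|h]]; auto.
- pose proof (nk_mono D _ _ h); lia.
- pose proof (nk_mono D _ _ h); lia.
Qed.
Lemma nk_ge {b} {X : Banach b} {Xs} (D : Data X Xs) k : (k <= nk D k)%nat.
Proof. induction k; [lia|]. pose proof (nk_inc D k). lia. Qed.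

Lemma T_add {b} {X : Banach b} {Xs} (D : Data X Xs) w u v n :
  Top D w (vadd X u v) n = vadd (Xs n) (Top D w u n) (Top D w v n).
Proof.
destruct (T_char D w n) as [[k [H E]]|[_ E]]; rewrite !E.
- rewrite <- tr_add, <- vscal_distr_v. destruct (Rk_lin D k) as [Ha _]. rewrite Ha. reflexivity.
- rewrite vadd_0. reflexivity.
Qed.
Lemma T_scal {b} {X : Banach b} {Xs} (D : Data X Xs) w a u n :
  Top D w (vscal X a u) n = vscal (Xs n) a (Top D w u n).
Proof.
destruct (T_char D w n) as [[k [H E]]|[_ E]]; rewrite !E.
- rewrite <- tr_scal. destruct (Rk_lin D k) as [_ Hs]. rewrite Hs, !vscal_assoc, Kmul_comm.
  reflexivity.
- rewrite scal_0. reflexivity.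
Qed.
Lemma T_zero {b} {X : Banach b} {Xs} (D : Data X Xs) w n :
  Top D w (vzero X) n = vzero (Xs n).
Proof.
rewrite <- (scal_K0 X (vzero X)), T_scal, scal_K0. reflexivity.
Qed.
Lemma T_sub {b} {X : Banach b} {Xs} (D : Data X Xs) w u v n :
  Top D w (vadd X u (vopp X v)) n = vadd (Xs n) (Top D w u n) (vopp (Xs n) (Top D w v n)).
Proof. rewrite T_add, opp_scal, T_scal, <- opp_scal. reflexivity. Qed.

Lemma T_norm_nk {b} {X : Banach b} {Xs} (D : Data X Xs) w k u :
  vnorm (Xs (nk D k)) (Top D w u (nk D k)) = Rabs (w k) * vnorm (Xs (nk D k)) (Rk D k u).
Proof.
destruct (T_char D w (nk D k)) as [[k' [H E]]|[Hn _]].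
- rewrite E, tr_norm, vnorm_scal, Kabs_Kr. pose proof (nk_inj D _ _ H). subst k'. reflexivity.
- exfalso; apply Hn; exists k; reflexivity.
Qed.
Lemma T_norm_off {b} {X : Banach b} {Xs} (D : Data X Xs) w n u :
  (~ exists k, nk D k = n) -> vnorm (Xs n) (Top D w u n) = 0.
Proof.
intro Hn. destruct (T_char D w n) as [[k' [H E]]|[_ E]].
- exfalso; apply Hn; exists k'; exact H.
- rewrite E; apply norm_0.
Qed.

Lemma nk_le {b} {X : Banach b} {Xs} (D : Data X Xs) j k : (j <= k)%nat -> (nk D j <= nk D k)%nat.
Proof. intro H. destruct (Nat.eq_dec j k); [subst; lia|]. pose proof (nk_mono D j k ltac:(lia)); lia. Qed.

Lemma sum_zeros g a c : (a <= c)%nat -> (forall n, (a < n <= c)%nat -> g n = 0) ->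
  sum_f_R0 g c = sum_f_R0 g a.
Proof.
intros H. induction H; intro Hz; [reflexivity|].
cbn [sum_f_R0]. rewrite IHle, (Hz (S m)); [ring|lia|]. intros; apply Hz; lia.
Qed.
Lemma sum_zeros0 g c : (forall n, (n <= c)%nat -> g n = 0) -> sum_f_R0 g c = 0.
Proof.
intro H. induction c; cbn [sum_f_R0]. apply H; lia. rewrite IHc, H; [ring|lia|]. intros; apply H; lia.
Qed.

Lemma range_sum {b} {X : Banach b} {Xs} (D : Data X Xs) g :
  (forall n, (~ exists k, nk D k = n) -> g n = 0) ->
  forall K, sum_f_R0 g (nk D K) = sum_f_R0 (fun k => g (nk D k)) K.
Proof.
intros Hg K. induction K.
- cbn [sum_f_R0]. destruct (nk D 0) as [|m] eqn:E; [cbn [sum_f_R0]; reflexivity|].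
  cbn [sum_f_R0]. rewrite sum_zeros0; [ring|]. intros n Hn. apply Hg. intros [j Hj].
  pose proof (nk_le D 0 j ltac:(lia)). lia.
- cbn [sum_f_R0]. rewrite <- IHK. pose proof (nk_inc D K).
  destruct (nk D (S K)) as [|m] eqn:E; [lia|].
  cbn [sum_f_R0]. rewrite (sum_zeros g (nk D K) m); [reflexivity|lia|].
  intros n Hn. apply Hg. intros [j Hj]. subst n.
  destruct (Compare_dec.le_lt_dec j K) as [h|h].
  + pose proof (nk_le D j K h). lia.
  + pose proof (nk_le D (S K) j h). lia.
Qed.

Definition Gs {b} {X : Banach b} {Xs} (D : Data X Xs) w q u (n : nat) : R :=
  rpow (vnorm (Xs n) (Top D w u n)) q.

Lemma Gs_sum {b} {X : Banach b} {Xs} (D : Data X Xs) w q u K :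
  sum_f_R0 (Gs D w q u) (nk D K) =
  sum_f_R0 (fun k => rpow (Rabs (w k) * vnorm (Xs (nk D k)) (Rk D k u)) q) K.
Proof.
rewrite range_sum.
- apply sum_eq. intros; unfold Gs; rewrite T_norm_nk; reflexivity.
- intros n Hn. unfold Gs. rewrite T_norm_off by exact Hn. apply rpow_0.
Qed.

Lemma T_in_lp {b} {X : Banach b} {Xs} (D : Data X Xs) w p u :
  0 < p -> (forall k, 0 < w k) -> (exists B, forall N, sum_f_R0 (fun k => rpow (w k) p) N <= B) ->
  in_lp Xs p (Top D w u).
Proof.
intros Hp Hw [B HB]. unfold in_lp.
assert (Hg : forall n, 0 <= Gs D w p u n) by (intro; apply rpow_nonneg).
destruct (growing_cv (sum_f_R0 (Gs D w p u))) as [s Hs].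
- intro n. cbn [sum_f_R0]. pose proof (Hg (S n)). lra.
- exists (B * rpow (dl D * vnorm X u) p). intros x [N ->].
  apply Rle_trans with (sum_f_R0 (Gs D w p u) (nk D N)); [apply sum_mono; [exact Hg|apply nk_ge]|].
  rewrite Gs_sum.
  apply Rle_trans with (sum_f_R0 (fun k => rpow (w k) p * rpow (dl D * vnorm X u) p) N).
  + apply sum_le. intro k. rewrite <- rpow_mult.
    * apply rpow_le; [exact Hp|]. split.
      -- apply Rmult_le_pos; [apply Rabs_pos|apply vnorm_nonneg].
      -- rewrite Rabs_pos_eq by (left; apply Hw).
         apply Rmult_le_compat_l; [left; apply Hw|]. apply Rk_ub.
    * left; apply Hw.
    * apply Rmult_le_pos; [left; apply dl_pos|apply vnorm_nonneg].
  + rewrite (sum_eq _ (fun k => rpow (dl D * vnorm X u) p * rpow (w k) p)) by (intros; ring).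
    rewrite sum_scal, Rmult_comm. apply Rmult_le_compat_r; [apply rpow_nonneg|apply HB].
- exists s; exact Hs.
Qed.

Lemma T_not_lp {b} {X : Banach b} {Xs} (D : Data X Xs) w q u :
  0 < q -> (forall k, 0 < w k) -> unbounded_sum (fun k => rpow (w k) q) -> u <> vzero X ->
  ~ in_lp Xs q (Top D w u).
Proof.
intros Hq Hw Hun Hu [s Hs].
assert (Hg : forall n, 0 <= Gs D w q u n) by (intro; apply rpow_nonneg).
assert (Hgr : Un_growing (sum_f_R0 (Gs D w q u))).
{ intro n. cbn [sum_f_R0]. pose proof (Hg (S n)). lra. }
pose proof (growing_ineq _ _ Hgr Hs) as Hle.
assert (Hnu : 0 < vnorm X u).
{ destruct (vnorm_nonneg _ X u) as [h|h]; [exact h|]. exfalso; apply Hu, vnorm_eq0; auto. }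
pose proof (dl_pos D) as Hdl.
set (c := rpow (vnorm X u / dl D) q).
assert (Hc : 0 < c).
{ unfold c. rewrite rpow_pos by (apply Rdiv_lt_0_compat; lra). apply rpow_Rpower_pos.
  apply Rdiv_lt_0_compat; lra. }
destruct (Hun ((s + 1) / c)) as [K HK].
specialize (Hle (nk D K)). rewrite Gs_sum in Hle.
assert (H2 : sum_f_R0 (fun k => rpow (w k) q) K * c <=
             sum_f_R0 (fun k => rpow (Rabs (w k) * vnorm (Xs (nk D k)) (Rk D k u)) q) K).
{ rewrite Rmult_comm, <- sum_scal. apply sum_le. intro k. unfold c.
  rewrite Rmult_comm, <- rpow_mult.
  - apply rpow_le; [exact Hq|]. split.
    + apply Rmult_le_pos; [left; apply Hw|]. left; apply Rdiv_lt_0_compat; lra.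
    + rewrite Rabs_pos_eq by (left; apply Hw). apply Rmult_le_compat_l; [left; apply Hw|].
      pose proof (Rk_lb D k u). apply Rmult_le_reg_l with (dl D); [exact Hdl|].
      replace (dl D * (vnorm X u / dl D)) with (vnorm X u) by (field; lra). exact H.
  - left; apply Hw.
  - left; apply Rdiv_lt_0_compat; lra. }
assert (H3 : (s + 1) / c * c = s + 1) by (field; lra).
assert (H4 : (s + 1) / c * c <= sum_f_R0 (fun k => rpow (w k) q) K * c)
  by (apply Rmult_le_compat_r; lra).
lra.
Qed.

Lemma T_in_c0 {b} {X : Banach b} {Xs} (D : Data X Xs) w u :
  (forall k, 0 < w k) -> (forall eps, 0 < eps -> exists K, forall k, (K <= k)%nat -> w k < eps) ->
  in_c0 Xs (Top D w u).
Proof.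
intros Hw Hsm eps He. pose proof (dl_pos D) as Hd0. pose proof (vnorm_nonneg _ X u) as Hu0.
set (C := dl D * vnorm X u + 1).
assert (HC : 0 < C) by (unfold C; nra).
destruct (Hsm (eps / C)) as [K HK]; [apply Rdiv_lt_0_compat; lra|].
exists (nk D K). intros n Hn. unfold R_dist. rewrite Rminus_0_r.
rewrite Rabs_pos_eq by apply vnorm_nonneg.
destruct (T_char D w n) as [[k [H _]]|[Hoff _]].
- subst n. rewrite T_norm_nk, Rabs_pos_eq by (left; apply Hw).
  assert (Hk : (K <= k)%nat).
  { destruct (Compare_dec.le_lt_dec K k) as [h|h]; [exact h|]. pose proof (nk_mono D _ _ h). lia. }
  specialize (HK k Hk). pose proof (Rk_ub D k u). pose proof (Hw k).
  apply Rle_lt_trans with (w k * (dl D * vnorm X u)); [apply Rmult_le_compat_l; lra|].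
  apply Rle_lt_trans with (eps / C * (dl D * vnorm X u)); [apply Rmult_le_compat_r; [apply Rmult_le_pos; lra|lra]|].
  assert (eps / C * C = eps) by (field; lra).
  assert (0 < eps / C) by (apply Rdiv_lt_0_compat; lra).
  assert (eps / C * (dl D * vnorm X u) < eps / C * C) by (apply Rmult_lt_compat_l; [assumption|unfold C; lra]).
  lra.
- rewrite T_norm_off by exact Hoff. exact He.
Qed.

Lemma T_lip {b} {X : Banach b} {Xs} (D : Data X Xs) w n :
  exists C, 0 <= C /\ forall u, vnorm (Xs n) (Top D w u n) <= C * vnorm X u.
Proof.
destruct (T_char D w n) as [[k [H _]]|[Hoff _]].
- subst n. exists (Rabs (w k) * dl D). split.
  + apply Rmult_le_pos; [apply Rabs_pos|left; apply dl_pos].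
  + intro u. rewrite T_norm_nk, Rmult_assoc. apply Rmult_le_compat_l; [apply Rabs_pos|apply Rk_ub].
- exists 0. split; [lra|]. intro u. rewrite T_norm_off by exact Hoff. lra.
Qed.

Lemma closed_core {b} {X : Banach b} {Xs} (D : Data X Xs) w (y : nat -> Seq Xs) x :
  0 < w 0%nat -> (forall k, exists u, y k = Top D w u) ->
  (forall n eps, 0 < eps -> exists K, forall k, (K <= k)%nat -> seq_dnorm Xs (y k) x n <= eps) ->
  exists u, x = Top D w u.
Proof.
intros Hw0 Hy Hconv.
set (uk := fun k => proj1_sig (constructive_indefinite_description _ (Hy k))).
assert (Huk : forall k, y k = Top D w (uk k)).
{ intro k. unfold uk. destruct (constructive_indefinite_description _ (Hy k)); auto. }
pose proof (dl_pos D) as Hdl.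
destruct (vcomplete _ X uk) as [l Hl].
- intros eps He. set (n0 := nk D 0).
  destruct (Hconv n0 (eps * w 0%nat / (4 * dl D))) as [K HK].
  { apply Rdiv_lt_0_compat; nra. }
  exists K. intros m n Hm Hn.
  pose proof (HK m Hm) as H1. pose proof (HK n Hn) as H2. unfold seq_dnorm in H1, H2.
  rewrite !Huk in H1, H2.
  pose proof (Rk_lb D 0 (vadd X (uk m) (vopp X (uk n)))) as H3.
  pose proof (T_norm_nk D w 0 (vadd X (uk m) (vopp X (uk n)))) as H4.
  rewrite T_sub in H4. fold n0 in H4 |- *.
  pose proof (dist_tri (Xs n0) (Top D w (uk m) n0) (x n0) (Top D w (uk n) n0)) as H5.
  rewrite (dist_sym _ (x n0)) in H5.
  rewrite Rabs_pos_eq in H4 by lra.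
  assert (H6 : w 0%nat * vnorm (Xs n0) (Rk D 0 (vadd X (uk m) (vopp X (uk n)))) <=
               eps * w 0%nat / (4 * dl D) + eps * w 0%nat / (4 * dl D)) by lra.
  assert (H7 : vnorm (Xs n0) (Rk D 0 (vadd X (uk m) (vopp X (uk n)))) <= eps / (2 * dl D)).
  { apply Rmult_le_reg_l with (w 0%nat); [exact Hw0|].
    replace (w 0%nat * (eps / (2 * dl D))) with (eps * w 0%nat / (4 * dl D) + eps * w 0%nat / (4 * dl D))
      by (field; lra). exact H6. }
  assert (H8 : dl D * (eps / (2 * dl D)) = eps / 2) by (field; lra).
  assert (H9 : dl D * vnorm (Xs n0) (Rk D 0 (vadd X (uk m) (vopp X (uk n)))) <= dl D * (eps / (2 * dl D)))
    by (apply Rmult_le_compat_l; lra).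
  fold n0 in H3. lra.
- exists l. apply functional_extensionality_dep. intro n.
  apply eq_of_small. intros eps He.
  destruct (T_lip D w n) as [C [HC HCl]].
  destruct (Hconv n (eps / 2)) as [K1 HK1]; [lra|].
  destruct (Hl (eps / (2 * (C + 1)))) as [K2 HK2]; [apply Rdiv_lt_0_compat; lra|].
  set (m := Nat.max K1 K2).
  specialize (HK1 m ltac:(lia)). specialize (HK2 m ltac:(lia)).
  unfold seq_dnorm in HK1. rewrite Huk in HK1.
  rewrite dist_sym. eapply Rle_trans; [apply (dist_tri _ _ (Top D w (uk m) n))|].
  rewrite dist_sym, <- T_sub.
  specialize (HCl (vadd X (uk m) (vopp X l))).
  assert (C * vnorm X (vadd X (uk m) (vopp X l)) <= eps / 2).
  { apply Rle_trans with ((C + 1) * (eps / (2 * (C + 1)))).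
    - pose proof (vnorm_nonneg _ X (vadd X (uk m) (vopp X l))). nra.
    - right; field; lra. }
  lra.
Qed.

Definition Wsp {b} {X : Banach b} {Xs} (D : Data X Xs) w : Seq Xs -> Prop :=
  fun z => exists u, z = Top D w u.

Lemma T_add_f {b} {X : Banach b} {Xs} (D : Data X Xs) w u v :
  seq_add Xs (Top D w u) (Top D w v) = Top D w (vadd X u v).
Proof. apply functional_extensionality_dep; intro n; unfold seq_add; rewrite T_add; reflexivity. Qed.
Lemma T_scal_f {b} {X : Banach b} {Xs} (D : Data X Xs) w a u :
  seq_scal Xs a (Top D w u) = Top D w (vscal X a u).
Proof. apply functional_extensionality_dep; intro n; unfold seq_scal; rewrite T_scal; reflexivity. Qed.
Lemma T_zero_f {b} {X : Banach b} {Xs} (D : Data X Xs) w :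
  seq0 Xs = Top D w (vzero X).
Proof. apply functional_extensionality_dep; intro n; unfold seq0; rewrite T_zero; reflexivity. Qed.

Lemma T_inj {b} {X : Banach b} {Xs} (D : Data X Xs) w v :
  0 < w 0%nat -> Top D w v = seq0 Xs -> v = vzero X.
Proof.
intros Hw E. apply vnorm_eq0.
pose proof (T_norm_nk D w 0 v) as H. rewrite E in H. unfold seq0 in H. rewrite norm_0 in H.
rewrite Rabs_pos_eq in H by lra.
assert (H2 : vnorm (Xs (nk D 0)) (Rk D 0 v) = 0).
{ destruct (Rmult_integral _ _ (eq_sym H)); [lra|auto]. }
pose proof (Rk_lb D 0 v). rewrite H2, Rmult_0_r in H0. pose proof (vnorm_nonneg _ X v). lra.
Qed.

Lemma W_subspace {b} {X : Banach b} {Xs} (D : Data X Xs) w : is_subspace Xs (Wsp D w).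
Proof.
split; [|split].
- exists (vzero X); apply T_zero_f.
- intros x y [u ->] [v ->]. exists (vadd X u v); apply T_add_f.
- intros a x [u ->]. exists (vscal X a u); apply T_scal_f.
Qed.

Lemma T_lincomb {b} {X : Banach b} {Xs} (D : Data X Xs) w {I} (c : I -> Kt b) e l :
  lincomb (seq_add Xs) (seq_scal Xs) (seq0 Xs) c (fun i => Top D w (e i)) l =
  Top D w (lincomb (vadd X) (vscal X) (vzero X) c e l).
Proof.
induction l as [|i l IH]; simpl.
- apply T_zero_f.
- rewrite IH, T_scal_f, T_add_f. reflexivity.
Qed.

Lemma W_dim {b} {X : Banach b} {Xs} (D : Data X Xs) w :
  0 < w 0%nat -> same_dim X Xs (Wsp D w).
Proof.
intro Hw. destruct (hamel_exists X) as [I [e [He1 [He2 He3]]]].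
exists I, e, (fun i => Top D w (e i)). split; [split; [exact He1|split; [exact He2|exact He3]]|].
split; [|split].
- intro i; exists (e i); reflexivity.
- intros l c Hnd Hz. rewrite T_lincomb in Hz. apply T_inj in Hz; [|exact Hw].
  exact (He2 l c Hnd Hz).
- intros z [u ->]. destruct (He3 u Logic.I) as [l [c ->]]. exists l, c.
  symmetry; apply T_lincomb.
Qed.

Lemma coord_lp {b} (Xs : nat -> Banach b) p (y : nat -> Seq Xs) x : 0 < p ->
  (forall eps, 0 < eps -> exists K, forall k, (K <= k)%nat -> forall N,
        sum_f_R0 (fun n => rpow (seq_dnorm Xs (y k) x n) p) N <= eps) ->
  forall n eps, 0 < eps -> exists K, forall k, (K <= k)%nat -> seq_dnorm Xs (y k) x n <= eps.
Proof.
intros Hp H n eps He. destruct (H (Rpower eps p)) as [K HK]; [apply rpow_Rpower_pos; exact He|].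
exists K. intros k Hk. specialize (HK k Hk n).
apply (rpow_small _ _ p Hp He); [apply vnorm_nonneg|].
eapply Rle_trans; [|exact HK]. apply (sum_ge_term (fun n => rpow (seq_dnorm Xs (y k) x n) p));
  [intro; apply rpow_nonneg|lia].
Qed.

Lemma spaceable_lp {b} {X : Banach b} {Xs} (D : Data X Xs) w p :
  0 < p -> (forall k, 0 < w k) ->
  (exists B, forall N, sum_f_R0 (fun k => rpow (w k) p) N <= B) ->
  (forall q, 0 < q < p -> unbounded_sum (fun k => rpow (w k) q)) ->
  spaceable X Xs (in_lp Xs p) (closed_lp Xs p)
       (fun x => in_lp Xs p x /\ ~ (exists q, 0 < q < p /\ in_lp Xs q x)).
Proof.
intros Hp Hw HB Hun. exists (Wsp D w). split; [apply W_subspace|split; [|split; [|split]]].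
- intros x [u ->]. apply T_in_lp; auto.
- intros y x Hy _ Hc. apply (closed_core D w y x (Hw 0%nat) Hy). apply coord_lp with p; auto.
- intros x [u ->]. destruct (classic (u = vzero X)) as [E|E].
  + right. subst. symmetry; apply T_zero_f.
  + left. split; [apply T_in_lp; auto|]. intros [q [Hq Hin]].
    apply (T_not_lp D w q u); auto; lra.
- apply W_dim, Hw.
Qed.

Lemma spaceable_c0 {b} {X : Banach b} {Xs} (D : Data X Xs) w :
  (forall k, 0 < w k) ->
  (forall eps, 0 < eps -> exists K, forall k, (K <= k)%nat -> w k < eps) ->
  (forall q, 0 < q -> unbounded_sum (fun k => rpow (w k) q)) ->
  spaceable X Xs (in_c0 Xs) (closed_c0 Xs)
    (fun x => in_c0 Xs x /\ ~ (exists p, 0 < p /\ in_lp Xs p x)).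
Proof.
intros Hw Hsm Hun. exists (Wsp D w). split; [apply W_subspace|split; [|split; [|split]]].
- intros x [u ->]. apply T_in_c0; auto.
- intros y x Hy _ Hc. apply (closed_core D w y x (Hw 0%nat) Hy).
  intros n eps He. destruct (Hc eps He) as [K HK]. exists K; intros k Hk; apply HK; exact Hk.
- intros x [u ->]. destruct (classic (u = vzero X)) as [E|E].
  + right. subst. symmetry; apply T_zero_f.
  + left. split; [apply T_in_c0; auto|]. intros [q [Hq Hin]].
    apply (T_not_lp D w q u); auto.
- apply W_dim, Hw.
Qed.

Theorem theorem3p2 (b : bool) (X : Banach b) (Xs : nat -> Banach b)
  (HX : infinite_dim X)
  (Hsub : exists nk : nat -> nat,
      (forall k, (nk k < nk (S k))%nat) /\ unif_isomorphs X (fun k => Xs (nk k))) :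
  (forall p : R, 0 < p ->
     spaceable X Xs (in_lp Xs p) (closed_lp Xs p)
       (fun x => in_lp Xs p x /\ ~ (exists q, 0 < q < p /\ in_lp Xs q x))) /\
  spaceable X Xs (in_c0 Xs) (closed_c0 Xs)
    (fun x => in_c0 Xs x /\ ~ (exists p, 0 < p /\ in_lp Xs p x)).
Proof.
destruct Hsub as [nk0 [Hinc [dl0 [Hdl HR]]]].
set (Rk0 := fun k => proj1_sig (constructive_indefinite_description _ (HR k))).
assert (HRk : forall k, is_linear X (Xs (nk0 k)) (Rk0 k) /\
      (forall x, vnorm (Xs (nk0 k)) (Rk0 k x) <= dl0 * vnorm X x) /\
      (forall x, vnorm X x <= dl0 * vnorm (Xs (nk0 k)) (Rk0 k x))).
{ intro k. unfold Rk0. destruct (constructive_indefinite_description _ (HR k)); auto. }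
set (D := {| nk := nk0; dl := dl0; Rk := Rk0; nk_inc := Hinc; dl_pos := Hdl;
             Rk_lin := fun k => proj1 (HRk k);
             Rk_ub := fun k => proj1 (proj2 (HRk k));
             Rk_lb := fun k => proj2 (proj2 (HRk k)) |} : Data X Xs).
split.
- intros p Hp. apply (spaceable_lp D (fun k => Rpower (ta k) (/ p)) p Hp).
  + intro k; apply rpow_Rpower_pos, ta_pos.
  + destruct ta_bounded as [B HB]. exists B. intro N.
    erewrite sum_eq; [apply HB|]. intros k _.
    rewrite rpow_pos by (apply rpow_Rpower_pos, ta_pos).
    rewrite Rpower_mult, Rinv_l, Rpower_1 by (try apply ta_pos; lra). reflexivity.
  + intros q Hq.
    assert (E : (fun k => rpow (Rpower (ta k) (/ p)) q) = (fun k => Rpower (ta k) (/ p * q))).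
    { apply functional_extensionality; intro k.
      rewrite rpow_pos by (apply rpow_Rpower_pos, ta_pos). apply Rpower_mult. }
    rewrite E. apply ta_unbounded. split.
    * apply Rmult_lt_0_compat; [apply Rinv_0_lt_compat|]; lra.
    * apply Rmult_lt_reg_l with p; [lra|]. rewrite <- Rmult_assoc, Rinv_r by lra. lra.
- apply (spaceable_c0 D tb).
  + apply tb_pos.
  + apply tb_small.
  + intros q Hq.
    assert (E : (fun k => rpow (tb k) q) = (fun k => Rpower (tb k) q)).
    { apply functional_extensionality; intro k. apply rpow_pos, tb_pos. }
    rewrite E. apply tb_unbounded, Hq.
Qed.
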